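(* Let $X$ be a real Banach space, $\alpha$ an ordinal, $\varepsilon>0$, $f\in B_{X^*}$, and $M\subset X^*$ such that (i) $\mathrm{dist}(f,M)\ge\varepsilon$, and (ii) for every $\beta<\alpha$ and every weak$^*$-slice $S$ of $d_\varepsilon^\beta(B_{X^*})$ with $f\in S$, one has $S\cap M\neq\emptyset$. Then $f\in d_\varepsilon^\alpha(B_{X^*})$.
   Context: For $x\in X,t\in\mathbb R$, $H(x,t)=\{x^*\in X^*: x^*(x)>t\}$; a weak$^*$-slice of a weak$^*$-compact $K\subset X^*$ is a nonempty set $H(x,t)\cap K$; $d_\varepsilon K$ is $K$ minus the union of all weak$^*$-slices of $K$ of norm diameter $<\varepsilon$; $d_\varepsilon^0K=K$, $d_\varepsilon^{\beta+1}K=d_\varepsilon(d_\varepsilon^\beta K)$, $d_\varepsilon^\beta K=\bigcap_{\mu<\beta}d_\varepsilon^\mu K$ for limit $\beta$. A set $M$ satisfying (i),(ii) is called an $\varepsilon$-$\alpha$-obstacle for $f$. *)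

(* Defs.v *)
From Stdlib Require Import Reals.
Open Scope R_scope.

Record Banach := {
  carrier :> Type;
  vzero : carrier;
  vadd : carrier -> carrier -> carrier;
  vopp : carrier -> carrier;
  vscal : R -> carrier -> carrier;
  vnorm : carrier -> R;
  vadd_assoc : forall x y z, vadd x (vadd y z) = vadd (vadd x y) z;
  vadd_comm : forall x y, vadd x y = vadd y x;
  vadd_0 : forall x, vadd x vzero = x;
  vadd_opp : forall x, vadd x (vopp x) = vzero;
  vscal_1 : forall x, vscal 1 x = x;
  vscal_assoc : forall a b x, vscal a (vscal b x) = vscal (a * b) x;
  vscal_distr_l : forall a x y, vscal a (vadd x y) = vadd (vscal a x) (vscal a y);
  vscal_distr_r : forall a b x, vscal (a + b) x = vadd (vscal a x) (vscal b x);
  vnorm_nonneg : forall x, 0 <= vnorm x;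
  vnorm_eq0 : forall x, vnorm x = 0 -> x = vzero;
  vnorm_scal : forall a x, vnorm (vscal a x) = Rabs a * vnorm x;
  vnorm_triangle : forall x y, vnorm (vadd x y) <= vnorm x + vnorm y;
  complete : forall u : nat -> carrier,
    (forall eps, eps > 0 -> exists N, forall m n, (m >= N)%nat -> (n >= N)%nat ->
        vnorm (vadd (u m) (vopp (u n))) < eps) ->
    exists l, forall eps, eps > 0 -> exists N, forall n, (n >= N)%nat ->
        vnorm (vadd (u n) (vopp l)) < eps
}.

Section Dual.
Variable X : Banach.

(** Functionals on X; elements of X^* are the linear bounded ones. *)
Definition functional := X -> R.
Definition fset := functional -> Prop.

Definition linear (g : functional) : Prop :=
  (forall x y, g (vadd X x y) = g x + g y) /\
  (forall a x, g (vscal X a x) = a * g x).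

Definition dnorm_le (g : functional) (r : R) : Prop :=
  forall x, Rabs (g x) <= r * vnorm X x.

Definition in_dual (g : functional) : Prop :=
  linear g /\ exists r, dnorm_le g r.

Definition dual_ball : fset := fun g => linear g /\ dnorm_le g 1.

Definition fsub (g h : functional) : functional := fun x => g x - h x.

Definition diam_lt (S : fset) (eps : R) : Prop :=
  exists r, r < eps /\ forall g h, S g -> S h -> dnorm_le (fsub g h) r.

Definition slice (A : fset) (x : X) (t : R) : fset := fun g => A g /\ g x > t.

Definition d_eps (eps : R) (A : fset) : fset :=
  fun g => A g /\ ~ (exists x t, slice A x t g /\ diam_lt (slice A x t) eps).

Definition dist_ge (f : functional) (M : fset) (eps : R) : Prop :=
  forall m, M m -> forall r, dnorm_le (fsub f m) r -> eps <= r.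

End Dual.

(** Ordinals are represented by elements of a well-ordered type. *)
Definition well_order {W : Type} (lt : W -> W -> Prop) : Prop :=
  well_founded lt /\
  (forall a b c, lt a b -> lt b c -> lt a c) /\
  (forall a, ~ lt a a) /\
  (forall a b, lt a b \/ a = b \/ lt b a).

(** D is the transfinite derivation family: D β = d_eps^β (B_{X^*}) for all β : W,
    given by the zero / successor / limit clauses. *)
Definition is_derivation (X : Banach) {W : Type} (lt : W -> W -> Prop)
    (eps : R) (D : W -> fset X) : Prop :=
  forall b : W,
    ((forall m, ~ lt m b) -> forall g, D b g <-> dual_ball X g) /\
    (forall c, lt c b -> (forall m, ~ (lt c m /\ lt m b)) ->
        forall g, D b g <-> d_eps X eps (D c) g) /\
    ((exists m, lt m b) -> (forall c, lt c b -> exists m, lt c m /\ lt m b) ->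
        forall g, D b g <-> (forall m, lt m b -> D m g)).

(* Main.v *)
Require Import Defs.
From Stdlib Require Import Reals Classical Lra.
Open Scope R_scope.

Theorem mainTheorem7 (X : Banach) (W : Type) (lt : W -> W -> Prop)
  (Hwo : well_order lt) (alpha : W) (eps : R) (Heps : eps > 0)
  (D : W -> fset X) (HD : is_derivation X lt eps D)
  (f : functional X) (Hf : dual_ball X f)
  (M : fset X) (HM : forall m, M m -> in_dual X m)
  (Hi : dist_ge X f M eps)
  (Hii : forall beta, lt beta alpha -> forall (x : X) (t : R),
           slice X (D beta) x t f ->
           exists m, M m /\ slice X (D beta) x t m) :
  D alpha f.
Proof.
  destruct Hwo as [Hwf [Htr [Hirr Htot]]].
  assert (Hlt : forall b c, lt c b -> (b = alpha \/ lt b alpha) -> lt c alpha).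
  { intros b c Hcb [->|Hb]; [exact Hcb| eapply Htr; eauto]. }
  assert (G : forall b, (b = alpha \/ lt b alpha) -> D b f).
  { intro b. induction b as [b IH] using (well_founded_ind Hwf).
    intros Hb. destruct (HD b) as [H0 [HS HL]].
    destruct (classic (exists m, lt m b)) as [Hex|Hnex].
    - destruct (classic (exists c, lt c b /\ forall m, ~ (lt c m /\ lt m b)))
        as [[c [Hcb Hmax]]|Hnomax].
      + apply (proj2 (HS c Hcb Hmax f)).
        split.
        * apply IH; auto. right. eapply Hlt; eauto.
        * intros [x [t [Hsl [r [Hr Hdiam]]]]].
          destruct (Hii c (Hlt b c Hcb Hb) x t Hsl) as [m [HMm Hsm]].
          pose proof (Hi m HMm r (Hdiam f m Hsl Hsm)). lra.
      + assert (Hlim : forall c, lt c b -> exists m, lt c m /\ lt m b).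
        { intros c Hcb. apply NNPP. intro Hn. apply Hnomax. exists c. split; auto.
          intros m Hm. apply Hn. exists m; exact Hm. }
        apply (proj2 (HL Hex Hlim f)).
        intros m Hmb. apply IH; auto. right. eapply Hlt; eauto.
    - apply (proj2 (H0 (fun m Hm => Hnex (ex_intro _ m Hm)) f)). exact Hf. }
  apply G; auto.
Qed.
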